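(* For every semi-perfect graph $G$, $$\mu_\alpha(G)=\min\{k\ge 1 : G \text{ has a } k\text{-tight clique partition}\}-1.$$
   Context: All graphs are finite, simple and undirected. For a graph $G$, $\alpha(G)$ is the maximum size of an independent set and $i(G)$ is the minimum size of a maximal (with respect to inclusion) independent set; the independence gap is $\mu_\alpha(G)=\alpha(G)-i(G)$. $\theta(G)$ denotes the minimum number of cliques whose union is $V(G)$. A graph $G$ is semi-perfect if $\alpha(G)=\theta(G)$. A clique partition of $G$ is a set of pairwise disjoint cliques whose union is $V(G)$. For a positive integer $k$, a clique partition of $G$ is $k$-tight if for every $k$ cliques of the partition, their union intersects every maximal independent set of $G$. *)

(* Defs.v *)
(* A finite simple graph is a finType T of vertices with an
   irreflexive symmetric adjacency relation e : rel T. *)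
From mathcomp Require Import all_boot.
Set Implicit Arguments. Unset Strict Implicit. Unset Printing Implicit Defensive.

Section Graph.
Variables (T : finType) (e : rel T).

Definition independent (S : {set T}) : bool :=
  [forall x in S, forall y in S, (x != y) ==> ~~ e x y].

Definition clique (C : {set T}) : bool :=
  [forall x in C, forall y in C, (x != y) ==> e x y].

Definition maximal_independent (S : {set T}) : bool :=
  independent S && [forall x, (x \notin S) ==> ~~ independent (x |: S)].

Definition alpha : nat := \max_(S : {set T} | independent S) #|S|.

(* i(G): minimum size of a maximal independent set (one always exists;
   #|T| is only the neutral element of the minimum) *)
Definition indep_dom : nat :=
  \big[minn/#|T|]_(S : {set T} | maximal_independent S) #|S|.

Definition mu_alpha : nat := alpha - indep_dom.

(* theta(G): minimum number of cliques whose union is V(G)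
   (a covering by cliques always exists, e.g. by singletons) *)
Definition theta : nat :=
  \big[minn/#|T|]_(P : {set {set T}} |
       [forall C in P, clique C] && (cover P == [set: T])) #|P|.

Definition semi_perfect : Prop := alpha = theta.

Definition clique_partition (P : {set {set T}}) : bool :=
  partition P [set: T] && [forall C in P, clique C].

Definition tight (k : nat) (P : {set {set T}}) : Prop :=
  forall Q : {set {set T}}, Q \subset P -> #|Q| = k ->
  forall S : {set T}, maximal_independent S ->
  (cover Q) :&: S != set0.

Definition has_tight_clique_partition (k : nat) : Prop :=
  exists P : {set {set T}}, clique_partition P /\ tight k P.

End Graph.

(* Main.v *)
Require Import Defs.
From mathcomp Require Import all_boot.
From mathcomp Require Import zify.

Set Implicit Arguments. Unset Strict Implicit. Unset Printing Implicit Defensive.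

Section Aux.
Variables (T : finType) (e : rel T).

Lemma bigmin_le (I : finType) (P : pred I) (F : I -> nat) d i0 :
  P i0 -> \big[minn/d]_(i | P i) F i <= F i0.
Proof.
move=> Pi0; have : i0 \in index_enum I by rewrite mem_index_enum.
elim: (index_enum I) => // j r IH; rewrite inE big_cons.
case/orP=> [/eqP <-|/IH]; first by rewrite Pi0 geq_minl.
by case: ifP => // _ h; rewrite geq_min h orbT.
Qed.

Lemma clique_indep C S x y : clique e C -> independent e S ->
  x \in C -> y \in C -> x \in S -> y \in S -> x = y.
Proof.
move=> /forall_inP cC /forall_inP iS xC yC xS yS.
apply/eqP; apply: contraT => nxy.
have := implyP (forall_inP (cC x xC) y yC) nxy.
by rewrite (negbTE (implyP (forall_inP (iS x xS) y yS) nxy)).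
Qed.

Lemma meet_count P S : clique_partition e P -> independent e S ->
  #|[set C in P | C :&: S != set0]| = #|S|.
Proof.
case/andP=> /and3P[/eqP cP tP _] /forall_inP cl iS.
have cov x : x \in cover P by rewrite cP inE.
have -> : [set C in P | C :&: S != set0] = pblock P @: S.
  apply/setP=> C; rewrite inE; apply/andP/imsetP.
  - case=> CP /set0Pn[y /setIP[yC yS]]; exists y => //.
    by rewrite (def_pblock tP CP yC).
  - case=> x xS ->; split; first exact: pblock_mem.
    by apply/set0Pn; exists x; rewrite inE mem_pblock cov.
apply: card_in_imset => x y xS yS eq.
have yb : y \in pblock P x by rewrite eq mem_pblock cov.
apply: (clique_indep (cl _ (pblock_mem (cov x))) iS) => //.
by rewrite mem_pblock cov.
Qed.

Lemma missed_count P S : clique_partition e P -> independent e S ->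
  #|[set C in P | C :&: S == set0]| = #|P| - #|S|.
Proof.
move=> cp iS; rewrite -(meet_count cp iS).
rewrite -(cardsID [set C | C :&: S != set0] P).
have -> : P :&: [set C | C :&: S != set0] = [set C in P | C :&: S != set0].
  by apply/setP=> C; rewrite !inE.
have -> : P :\: [set C | C :&: S != set0] = [set C in P | C :&: S == set0].
  by apply/setP=> C; rewrite !inE negbK andbC.
by rewrite addKn.
Qed.

Lemma indep_le_part P S : clique_partition e P -> independent e S ->
  #|S| <= #|P|.
Proof.
move=> cp iS; rewrite -(meet_count cp iS); apply: subset_leq_card.
by apply/subsetP=> C; rewrite inE => /andP[].
Qed.

Lemma sub_of_size (U : finType) (M : {set U}) k : k <= #|M| ->
  exists2 Q : {set U}, Q \subset M & #|Q| = k.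
Proof.
move=> kM; exists [set x in take k (enum M)].
  by apply/subsetP=> x; rewrite inE => /mem_take; rewrite mem_enum.
rewrite cardsE (card_uniqP _) ?take_uniq ?enum_uniq // size_takel //.
by rewrite -cardE.
Qed.

Lemma alpha_attained : exists2 S, independent e S & #|S| = alpha e.
Proof.
rewrite /alpha.
apply: (big_ind (fun x => exists2 S, independent e S & #|S| = x)).
- exists set0; last by rewrite cards0.
  by apply/forall_inP=> x; rewrite inE.
- move=> x y [S1 h1 <-] [S2 h2 <-].
  case: (leqP #|S1| #|S2|) => h.
  + by exists S2.
  + by exists S1.
- by move=> S hS; exists S.
Qed.

Lemma max_is_maximal S : independent e S -> #|S| = alpha e ->
  maximal_independent e S.
Proof.
move=> iS cS; rewrite /maximal_independent iS /=.
apply/forallP=> x; apply/implyP=> xS; apply/negP=> ix.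
have := @leq_bigmax_cond _ (independent e) (fun S : {set T} => #|S|) _ ix.
by rewrite -/(alpha e) -cS cardsU1 xS add1n ltnn.
Qed.

Lemma indep_dom_attained S0 : maximal_independent e S0 ->
  exists2 S, maximal_independent e S & #|S| <= indep_dom e.
Proof.
move=> m0; rewrite /indep_dom.
apply: (big_ind (fun x => exists2 S, maximal_independent e S & #|S| <= x)).
- by exists S0 => //; apply: max_card.
- move=> x y [S1 h1 c1] [S2 h2 c2].
  case: (leqP x y) => h.
  + by exists S1 => //; rewrite (minn_idPl h).
  + by exists S2 => //; rewrite (minn_idPr (ltnW h)).
- by move=> S hS; exists S.
Qed.

Lemma indep_dom_le S : maximal_independent e S -> indep_dom e <= #|S|.
Proof. move=> h; exact: (bigmin_le (fun S : {set T} => #|S|) _ h). Qed.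

Lemma clique_sub (C D : {set T}) : C \subset D -> clique e D -> clique e C.
Proof.
move=> /subsetP sCD /forall_inP cD; apply/forall_inP=> x xC.
apply/forall_inP=> y yC; exact: (forall_inP (cD x (sCD _ xC)) y (sCD _ yC)).
Qed.

Lemma theta_attained : exists2 P : {set {set T}},
  [forall C in P, clique e C] && (cover P == [set: T]) & #|P| <= theta e.
Proof.
rewrite /theta.
apply: (big_ind (fun x => exists2 P : {set {set T}},
  [forall C in P, clique e C] && (cover P == [set: T]) & #|P| <= x)).
- exists [set [set x] | x : T]; last by apply: leq_imset_card.
  apply/andP; split.
  + apply/forall_inP=> C /imsetP[x _ ->]; apply/forall_inP=> y /set1P ->.
    by apply/forall_inP=> z /set1P ->; rewrite eqxx.
  + apply/eqP/setP=> x; rewrite inE; apply/bigcupP; exists [set x].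
      exact: imset_f. by rewrite inE.
- move=> x y [S1 h1 c1] [S2 h2 c2].
  case: (leqP x y) => h.
  + by exists S1 => //; rewrite (minn_idPl h).
  + by exists S2 => //; rewrite (minn_idPr (ltnW h)).
- by move=> S hS; exists S.
Qed.

Lemma partition_from_cover (Pc : {set {set T}}) :
  [forall C in Pc, clique e C] && (cover Pc == [set: T]) ->
  exists2 P, clique_partition e P & #|P| <= #|Pc|.
Proof.
case/andP=> /forall_inP cl /eqP cv.
pose f x := odflt set0 [pick C in Pc | x \in C].
have fP x : f x \in Pc /\ x \in f x.
  have : x \in cover Pc by rewrite cv inE.
  case/bigcupP=> C CP xC; rewrite /f; case: pickP => [D /andP[] //|/(_ C)].
  by rewrite CP xC.
exists (preim_partition f [set: T]).
  rewrite /clique_partition preim_partitionP /=.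
  apply/forall_inP=> B /imsetP[x _ ->]; apply: (clique_sub (D := f x)).
    by apply/subsetP=> y; rewrite inE => /andP[_ /eqP ->]; case: (fP y).
  by apply: cl; case: (fP x).
have -> : preim_partition f [set: T] =
    (fun C => [set y in [set: T] | C == f y]) @: (f @: [set: T]).
  by rewrite -imset_comp.
apply: (leq_trans (leq_imset_card _ _)); apply: subset_leq_card.
by apply/subsetP=> C /imsetP[x _ ->]; case: (fP x).
Qed.

End Aux.

Theorem mainTheorem5 (T : finType) (e : rel T)
  (e_irr : irreflexive e) (e_sym : symmetric e) :
  semi_perfect e ->
  has_tight_clique_partition e (mu_alpha e).+1 /\
  (forall k : nat, 1 <= k -> has_tight_clique_partition e k -> (mu_alpha e).+1 <= k).
Proof.
move=> sp.
have [S0 iS0 cS0] := alpha_attained e.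
have mS0 := max_is_maximal iS0 cS0.
have [Sm mSm cSm] := indep_dom_attained mS0.
have alpha_le (P : {set {set T}}) : clique_partition e P -> alpha e <= #|P|.
  by move=> cp; rewrite -cS0; exact: (indep_le_part cp iS0).
split.
- have [Pc hPc cPc] := theta_attained e.
  have [P cp cP] := partition_from_cover hPc.
  exists P; split => // Q QP cQ S mS; apply/negP => /eqP hQ.
  have iS : independent e S by case/andP: mS.
  have : Q \subset [set C in P | C :&: S == set0].
    apply/subsetP=> C CQ; rewrite inE (subsetP QP _ CQ) /=.
    apply/eqP/setP=> x; rewrite !inE; apply/negP=> /andP[xC xS].
    have : x \in cover Q :&: S by rewrite inE xS andbT; apply/bigcupP; exists C.
    by rewrite hQ inE.
  move/subset_leq_card; rewrite cQ (missed_count cp iS).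
  have := indep_dom_le mS; rewrite /mu_alpha -sp in cPc.
  move: (leq_trans cP cPc) => h1 h2 h3.
  have := alpha_le P cp. rewrite /mu_alpha in h3. lia.
- move=> k _ [P [cp tP]]; rewrite ltnNge; apply/negP => kmu.
  have iSm : independent e Sm by case/andP: mSm.
  have : k <= #|[set C in P | C :&: Sm == set0]|.
    rewrite (missed_count cp iSm); have := alpha_le P cp.
    move: kmu cSm; rewrite /mu_alpha; lia.
  case/sub_of_size=> Q QM cQ.
  have QP : Q \subset P.
    by apply: (subset_trans QM); apply/subsetP=> C; rewrite inE => /andP[].
  move/eqP: (tP Q QP cQ Sm mSm); apply.
  apply/setP=> x; rewrite !inE; apply/negP=> /andP[/bigcupP[C CQ xC] xS].
  have := subsetP QM _ CQ; rewrite inE => /andP[_ /eqP h].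
  have : x \in C :&: Sm by rewrite inE xC.
  by rewrite h inE.
Qed.
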